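(* Let $K$ be a positive integer and $m$ an integer with $m\equiv K\pmod 2$. Then \[ C_{m,K}^{2K}(q)=\frac{q^{s(m,K,2K)}}{J_{1}^3}\,f_{K+1,K+1,1}\big(q^{K+1},q^{1+\frac{1}{2}(m+K)},q\big). \]
   Context: Let $q=e^{2\pi i\tau}$ with $\operatorname{Im}\tau>0$, and for real $\alpha$ put $q^{\alpha}:=e^{2\pi i\alpha\tau}$. For $x\in\mathbb{C}^*$, $j(x;q):=\sum_{n\in\mathbb{Z}}(-1)^nq^{n(n-1)/2}x^n$, and $J_1:=\prod_{i\ge1}(1-q^i)$. For positive integers $a,b,c$ and $x,y\in\mathbb{C}^*$, the Hecke-type double-sum is $f_{a,b,c}(x,y,q):=\Big(\sum_{r,s\ge0}-\sum_{r,s<0}\Big)(-1)^{r+s}x^ry^sq^{a\binom{r}{2}+brs+c\binom{s}{2}}$. For a positive integer $N$ and integers $m,\ell$ with $0\le\ell\le N$, $m\equiv\ell\pmod 2$, put $s(m,\ell,N):=-\frac18+\frac{(\ell+1)^2}{4(N+2)}-\frac{m^2}{4N}$. The level-$N$ $A_1^{(1)}$ string function is given by $C_{m,\ell}^{N}(q)=\dfrac{q^{s(m,\ell,N)}}{J_1^3}\, f_{1,1+N,1}\big(q^{1+\frac12(m+\ell)},q^{1-\frac12(m-\ell)},q\big)$. *)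

(* Defs.v *)
From Stdlib Require Import Reals ZArith List.
From Coquelicot Require Import Coquelicot.
Open Scope R_scope.

Definition limC (u : nat -> C) : C := @lim C_CompleteNormedModule (filtermap u eventually).

(* q^alpha := e^{2 pi i alpha tau}, alpha real. *)
Definition qpow (tau : C) (alpha : R) : C :=
  RtoC (exp (- 2 * PI * alpha * Im tau)) *
  (RtoC (cos (2 * PI * alpha * Re tau)) + Ci * RtoC (sin (2 * PI * alpha * Re tau)))%C.

Definition zpowC (x : C) (z : Z) : C :=
  match z with
  | Z0 => RtoC 1
  | Zpos p => pow_n x (Pos.to_nat p)
  | Zneg p => Cinv (pow_n x (Pos.to_nat p))
  end.

Definition zbin2 (n : Z) : Z := Z.div (n * (n - 1)) 2.

Definition hecke_term (a b c : Z) (x y q : C) (r s : Z) : C :=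
  (zpowC (RtoC (-1)) (r + s) * zpowC x r * zpowC y s *
   zpowC q (a * zbin2 r + b * r * s + c * zbin2 s))%C.

(* f_{a,b,c}(x,y,q) = (sum_{r,s>=0} - sum_{r,s<0}) ...,
   as the limit of square partial sums (the series converge absolutely). *)
Definition hecke_partial (a b c : Z) (x y q : C) (n : nat) : C :=
  (sum_n (fun r => sum_n (fun s => hecke_term a b c x y q (Z.of_nat r) (Z.of_nat s)) n) n
   - sum_n (fun r => sum_n (fun s =>
        hecke_term a b c x y q (- Z.of_nat (S r)) (- Z.of_nat (S s))) n) n)%C.

Definition hecke_f (a b c : Z) (x y q : C) : C := limC (hecke_partial a b c x y q).

Definition J1_partial (tau : C) (n : nat) : C :=
  fold_right Cmult (RtoC 1)
    (map (fun i => (RtoC 1 - qpow tau (INR (S i)))%C) (seq 0 n)).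

Definition J1 (tau : C) : C := limC (J1_partial tau).

Definition sfun (m l N : Z) : R :=
  - 1 / 8 + (IZR l + 1) ^ 2 / (4 * (IZR N + 2)) - (IZR m) ^ 2 / (4 * IZR N).

(* level-N A_1^(1) string function C^N_{m,l}(q) *)
Definition string_fn (m l N : Z) (tau : C) : C :=
  (qpow tau (sfun m l N) / (J1 tau) ^ 3 *
   hecke_f 1 (1 + N) 1 (qpow tau (1 + (IZR m + IZR l) / 2))
                       (qpow tau (1 - (IZR m - IZR l) / 2)) (qpow tau 1))%C.

(* Main.v *)
Require Import Defs.
From Stdlib Require Import Reals ZArith List Permutation Lia Lra Classical.
From Coquelicot Require Import Coquelicot.
Open Scope R_scope.

Definition SC {A} (l : list A) (g : A -> C) : C := fold_right Cplus (RtoC 0) (map g l).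
Definition SR {A} (l : list A) (g : A -> R) : R := fold_right Rplus 0 (map g l).

Lemma SC_app {A} (l1 l2 : list A) g : SC (l1 ++ l2) g = (SC l1 g + SC l2 g)%C.
Proof. induction l1; unfold SC in *; simpl. ring. rewrite IHl1. ring. Qed.

Lemma SC_map {A B} (f : A -> B) l g : SC (map f l) g = SC l (fun x => g (f x)).
Proof. unfold SC. now rewrite map_map. Qed.

Lemma SC_ext {A} (l : list A) g h : (forall x, In x l -> g x = h x) -> SC l g = SC l h.
Proof. induction l; intros H; unfold SC in *; simpl. auto.
rewrite H by now left. rewrite IHl; auto. intros; apply H; now right. Qed.

Lemma SC_perm {A} (l l' : list A) g : Permutation l l' -> SC l g = SC l' g.
Proof. induction 1; unfold SC in *; simpl; try congruence. ring. Qed.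

Lemma SC_filter {A} (P : A -> bool) l g :
  SC (filter P l) g = SC l (fun x => if P x then g x else RtoC 0).
Proof. induction l; unfold SC in *; simpl. auto. destruct (P a); simpl; rewrite IHl; ring. Qed.

Lemma SC_embed {A} (l B : list A) (P : A -> bool) g :
  NoDup l -> NoDup B -> (forall x, In x l <-> In x B /\ P x = true) ->
  SC l g = SC B (fun x => if P x then g x else RtoC 0).
Proof. intros Hl HB H. rewrite <- SC_filter. apply SC_perm.
apply NoDup_Permutation; auto. now apply NoDup_filter.
intros x. rewrite filter_In. apply H. Qed.

Lemma SC_plus {A} (l : list A) f g : SC l (fun x => f x + g x)%C = (SC l f + SC l g)%C.
Proof. induction l; unfold SC in *; simpl. ring. rewrite IHl. ring. Qed.

Lemma SC_minus {A} (l : list A) f g : SC l (fun x => f x - g x)%C = (SC l f - SC l g)%C.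
Proof. induction l; unfold SC in *; simpl. ring. rewrite IHl. ring. Qed.

Lemma SC_opp {A} (l : list A) f : SC l (fun x => - f x)%C = (- SC l f)%C.
Proof. induction l; unfold SC in *; simpl. ring. rewrite IHl. ring. Qed.

Lemma SC_prod {A B} (l1 : list A) (l2 : list B) g :
  SC (list_prod l1 l2) g = SC l1 (fun a => SC l2 (fun b => g (a, b))).
Proof. induction l1; simpl. reflexivity.
rewrite SC_app, SC_map, IHl1. unfold SC at 3. simpl. reflexivity. Qed.

Lemma sum_n_SC (f : nat -> C) n : sum_n f n = SC (seq 0 (S n)) f.
Proof. induction n. rewrite sum_O. unfold SC; simpl. ring.
rewrite sum_Sn, IHn, (seq_S (S n)), SC_app. unfold SC at 3; simpl. 
change plus with Cplus. ring. Qed.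

Lemma Cmod_SC {A} (l : list A) g : Cmod (SC l g) <= SR l (fun x => Cmod (g x)).
Proof. induction l; unfold SC, SR in *; simpl. rewrite Cmod_0; lra.
eapply Rle_trans. apply Cmod_triangle. lra. Qed.

Lemma SR_le {A} (l : list A) f g : (forall x, In x l -> f x <= g x) -> SR l f <= SR l g.
Proof. induction l; intros H; unfold SR in *; simpl. lra.
apply Rplus_le_compat. apply H; now left. apply IHl; intros; apply H; now right. Qed.

Lemma SR_scal {A} (l : list A) c f : SR l (fun x => c * f x) = c * SR l f.
Proof. induction l; unfold SR in *; simpl. ring. rewrite IHl. ring. Qed.

Lemma SR_app {A} (l1 l2 : list A) g : SR (l1 ++ l2) g = SR l1 g + SR l2 g.
Proof. induction l1; unfold SR in *; simpl. ring. rewrite IHl1. ring. Qed.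

Lemma SR_map {A B} (f : A -> B) l g : SR (map f l) g = SR l (fun x => g (f x)).
Proof. unfold SR. now rewrite map_map. Qed.

Lemma SR_prod {A B} (l1 : list A) (l2 : list B) f g :
  SR (list_prod l1 l2) (fun p => f (fst p) * g (snd p)) = SR l1 f * SR l2 g.
Proof. induction l1; simpl. unfold SR; simpl; ring.
rewrite SR_app, SR_map, IHl1. simpl. rewrite SR_scal. change (SR (a :: l1) f) with (f a + SR l1 f). unfold SR; ring. Qed.

Lemma NoDup_list_prod {A B} (l1 : list A) (l2 : list B) :
  NoDup l1 -> NoDup l2 -> NoDup (list_prod l1 l2).
Proof. induction l1; intros H1 H2; simpl. constructor.
inversion H1; subst. apply NoDup_app.
apply FinFun.Injective_map_NoDup; auto. intros x y Hxy; now injection Hxy.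
auto. intros x Hx Hy. apply in_map_iff in Hx. destruct Hx as [b [<- _]].
apply in_prod_iff in Hy. tauto. Qed.

Definition Ef (a t : R) : C :=
  (RtoC (exp a) * (RtoC (cos t) + Ci * RtoC (sin t)))%C.

Lemma Ef_pair a t : Ef a t = (exp a * cos t, exp a * sin t).
Proof. unfold Ef, Cmult, Cplus, RtoC, Ci; simpl. f_equal; ring. Qed.

Lemma Ef_mul a t b u : (Ef a t * Ef b u)%C = Ef (a + b) (t + u).
Proof. rewrite !Ef_pair. unfold Cmult; simpl. rewrite exp_plus, cos_plus, sin_plus.
f_equal; ring. Qed.

Lemma Ef_0 : Ef 0 0 = RtoC 1.
Proof. rewrite Ef_pair, exp_0, cos_0, sin_0. unfold RtoC. f_equal; ring. Qed.

Lemma Ef_m1 : RtoC (-1) = Ef 0 PI.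
Proof. rewrite Ef_pair, exp_0, cos_PI, sin_PI. unfold RtoC. f_equal; ring. Qed.

Lemma qpow_Ef tau a : qpow tau a = Ef (- 2 * PI * a * Im tau) (2 * PI * a * Re tau).
Proof. reflexivity. Qed.

Lemma Ef_ext a t b u : a = b -> t = u -> Ef a t = Ef b u.
Proof. intros; subst; auto. Qed.

Lemma pow_n_Ef a t k : pow_n (Ef a t) k = Ef (a * INR k) (t * INR k).
Proof. induction k. simpl. rewrite !Rmult_0_r, Ef_0. reflexivity.
simpl pow_n. change mult with Cmult. rewrite IHk, Ef_mul.
apply Ef_ext; rewrite S_INR; ring. Qed.

Lemma Cinv_Ef a t : Cinv (Ef a t) = Ef (- a) (- t).
Proof. assert (H : (Ef a t * Ef (-a) (-t))%C = RtoC 1).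
{ rewrite Ef_mul, <- Ef_0. apply Ef_ext; ring. }
assert (Hn : Ef a t <> RtoC 0).
{ intro E. rewrite E in H. rewrite Cmult_0_l in H. injection H. lra. }
rewrite <- (Cmult_1_r (Cinv (Ef a t))), <- H, Cmult_assoc, Cinv_l by auto. ring. Qed.

Lemma zpow_Ef a t z : zpowC (Ef a t) z = Ef (a * IZR z) (t * IZR z).
Proof. destruct z; simpl.
- rewrite !Rmult_0_r, Ef_0. reflexivity.
- rewrite pow_n_Ef. rewrite <- positive_nat_Z, <- INR_IZR_INZ. reflexivity.
- rewrite pow_n_Ef, Cinv_Ef. apply Ef_ext; rewrite <- Pos2Z.opp_pos, opp_IZR,
   <- positive_nat_Z, <- INR_IZR_INZ; ring. Qed.

Lemma Cmod_Ef a t : Cmod (Ef a t) = exp a.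
Proof. rewrite Ef_pair. unfold Cmod; simpl.
match goal with |- sqrt ?X = _ => replace X with (Rsqr (exp a)) end.
apply sqrt_Rsqr. apply Rlt_le, exp_pos.
pose proof (sin2_cos2 t). unfold Rsqr in *. transitivity (exp a * exp a * (sin t * sin t + cos t * cos t)).
rewrite H; ring. ring. Qed.

Lemma cos_Z x k : cos (x + 2 * PI * IZR k) = cos x.
Proof. destruct (Z_le_gt_dec 0 k).
- rewrite <- (Z2Nat.id k) by lia. rewrite <- INR_IZR_INZ.
  rewrite <- (cos_period x (Z.to_nat k)). f_equal; ring.
- replace k with (- Z.of_nat (Z.to_nat (-k)))%Z by lia.
  rewrite opp_IZR, <- INR_IZR_INZ.
  rewrite <- (cos_period (x + 2 * PI * - INR (Z.to_nat (- k))) (Z.to_nat (-k))).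
  f_equal; ring. Qed.

Lemma sin_Z x k : sin (x + 2 * PI * IZR k) = sin x.
Proof. destruct (Z_le_gt_dec 0 k).
- rewrite <- (Z2Nat.id k) by lia. rewrite <- INR_IZR_INZ.
  rewrite <- (sin_period x (Z.to_nat k)). f_equal; ring.
- replace k with (- Z.of_nat (Z.to_nat (-k)))%Z by lia.
  rewrite opp_IZR, <- INR_IZR_INZ.
  rewrite <- (sin_period (x + 2 * PI * - INR (Z.to_nat (- k))) (Z.to_nat (-k))).
  f_equal; ring. Qed.

Lemma Ef_flip a t k : Ef a (t + 2 * PI * IZR k - PI) = (- Ef a t)%C.
Proof. rewrite !Ef_pair. unfold Copp; simpl.
replace (t + 2 * PI * IZR k - PI) with ((t - PI) + 2 * PI * IZR k) by ring.
rewrite cos_Z, sin_Z. unfold Rminus. rewrite cos_plus, sin_plus, cos_neg, sin_neg, cos_PI, sin_PI.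
f_equal; ring. Qed.

Lemma term_Ef (a b c : Z) ax tx ay ty aq tq r s :
  hecke_term a b c (Ef ax tx) (Ef ay ty) (Ef aq tq) r s =
  Ef (ax * IZR r + ay * IZR s + aq * IZR (a * zbin2 r + b * r * s + c * zbin2 s))
     (PI * IZR (r + s) + tx * IZR r + ty * IZR s + tq * IZR (a * zbin2 r + b * r * s + c * zbin2 s)).
Proof. unfold hecke_term. rewrite Ef_m1, !zpow_Ef, !Ef_mul. apply Ef_ext; ring. Qed.

Lemma zbin2_spec z : (2 * zbin2 z = z * (z - 1))%Z.
Proof. unfold zbin2. destruct (Z.Even_or_Odd z) as [[k ->]|[k ->]].
- replace (2 * k * (2 * k - 1))%Z with ((k * (2 * k - 1)) * 2)%Z by ring.
  rewrite Z.div_mul by lia. ring.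
- replace ((2 * k + 1) * (2 * k + 1 - 1))%Z with ((k * (2 * k + 1)) * 2)%Z by ring.
  rewrite Z.div_mul by lia. ring. Qed.

Definition e1 (K j r s : Z) : Z :=
  ((1 + K + j) * r + (1 - j) * s + (1 * zbin2 r + (1 + 2 * K) * r * s + 1 * zbin2 s))%Z.
Definition e2 (K j r s : Z) : Z :=
  ((K + 1) * r + (1 + K + j) * s + ((K + 1) * zbin2 r + (K + 1) * r * s + 1 * zbin2 s))%Z.

Lemma e_phi K j r s : e2 K j (2 * s) (r - s) = e1 K j r s.
Proof. unfold e1, e2. pose proof (zbin2_spec r). pose proof (zbin2_spec s).
pose proof (zbin2_spec (2*s)). pose proof (zbin2_spec (r - s)). lia. Qed.

Lemma e_psi K j r s : e2 K j (- 2 * r - 1) (r - s) = e1 K j r s.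
Proof. unfold e1, e2. pose proof (zbin2_spec r). pose proof (zbin2_spec s).
pose proof (zbin2_spec (-2*r-1)). pose proof (zbin2_spec (r - s)). lia. Qed.

Definition quad (r s : Z) : Prop := ((0 <= r /\ 0 <= s) \/ (r < 0 /\ s < 0))%Z.

Definition Dc (K j : Z) : Z := ((2 * Z.abs (1 + K + j) + 2 * Z.abs (1 - j) + 10) ^ 2)%Z.

Lemma e1_aux (K j r s Br Bs A1 A2 : Z) :
  (0 <= K)%Z -> quad r s ->
  (2 * Br = r * (r - 1))%Z -> (2 * Bs = s * (s - 1))%Z ->
  (- A1 <= 1 + K + j <= A1)%Z -> (- A2 <= 1 - j <= A2)%Z ->
  (2 * (Z.abs r + Z.abs s) - (2 * A1 + 2 * A2 + 10) ^ 2 <=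
   (1 + K + j) * r + (1 - j) * s + (1 * Br + (1 + 2 * K) * r * s + 1 * Bs))%Z.
Proof. intros HK Hq H H0 HA1 HA2.
destruct Hq as [[Hr Hs]|[Hr Hs]].
- rewrite (Z.abs_eq r), (Z.abs_eq s) by lia.
  assert (P1 : (0 <= (A1 + (1 + K + j)) * r)%Z) by (apply Z.mul_nonneg_nonneg; lia).
  assert (P2 : (0 <= (A2 + (1 - j)) * s)%Z) by (apply Z.mul_nonneg_nonneg; lia).
  assert (P3 : (0 <= K * (r * s))%Z) by (apply Z.mul_nonneg_nonneg; [lia|apply Z.mul_nonneg_nonneg; lia]).
  assert (P4 : (0 <= (r + s - (A1 + A2 + 5)) * (r + s - (A1 + A2 + 5)))%Z) by apply Z.square_nonneg.
  assert (P5 : (0 <= A1 * s)%Z) by (apply Z.mul_nonneg_nonneg; lia).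
  assert (P6 : (0 <= A2 * r)%Z) by (apply Z.mul_nonneg_nonneg; lia).
  assert (P7 : (0 <= (A1 + A2 + 5) * (A1 + A2 + 5))%Z) by (apply Z.mul_nonneg_nonneg; lia).
  assert (0 <= A1 /\ 0 <= A2)%Z by lia. clear HA1 HA2 HK.
  lia.
- rewrite (Z.abs_neq r), (Z.abs_neq s) by lia.
  assert (P1 : (0 <= (A1 - (1 + K + j)) * (- r))%Z) by (apply Z.mul_nonneg_nonneg; lia).
  assert (P2 : (0 <= (A2 - (1 - j)) * (- s))%Z) by (apply Z.mul_nonneg_nonneg; lia).
  assert (P3 : (0 <= K * ((-r) * (-s)))%Z) by (apply Z.mul_nonneg_nonneg; [lia|apply Z.mul_nonneg_nonneg; lia]).
  assert (P4 : (0 <= (r + s + (A1 + A2 + 5)) * (r + s + (A1 + A2 + 5)))%Z) by apply Z.square_nonneg.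
  assert (P5 : (0 <= A1 * (-s))%Z) by (apply Z.mul_nonneg_nonneg; lia).
  assert (P6 : (0 <= A2 * (-r))%Z) by (apply Z.mul_nonneg_nonneg; lia).
  assert (P7 : (0 <= (A1 + A2 + 5) * (A1 + A2 + 5))%Z) by (apply Z.mul_nonneg_nonneg; lia).
  assert (0 <= A1 /\ 0 <= A2)%Z by lia. clear HA1 HA2 HK.
  lia.
Qed.

Lemma e1_lower K j r s : (0 <= K)%Z -> quad r s ->
  (2 * (Z.abs r + Z.abs s) - Dc K j <= e1 K j r s)%Z.
Proof. intros HK Hq. unfold e1, Dc. apply e1_aux; auto using zbin2_spec; lia. Qed.

Lemma pair_inj {A B} (x1 x2 : A) (y1 y2 : B) : (x1, y1) = (x2, y2) -> x1 = x2 /\ y1 = y2.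
Proof. intros H; now inversion H. Qed.


Definition Qpos (n : nat) : list (Z * Z) :=
  map (fun p => (Z.of_nat (fst p), Z.of_nat (snd p))) (list_prod (seq 0 (S n)) (seq 0 (S n))).
Definition Qneg (n : nat) : list (Z * Z) :=
  map (fun p => (- Z.of_nat (S (fst p)), - Z.of_nat (S (snd p))))%Z (list_prod (seq 0 (S n)) (seq 0 (S n))).

Definition inQpos (n : nat) (p : Z * Z) : bool :=
  andb (andb (0 <=? fst p)%Z (fst p <=? Z.of_nat n)%Z) (andb (0 <=? snd p)%Z (snd p <=? Z.of_nat n)%Z).
Definition inQneg (n : nat) (p : Z * Z) : bool :=
  andb (andb (- Z.of_nat n - 1 <=? fst p)%Z (fst p <=? -1)%Z) (andb (- Z.of_nat n - 1 <=? snd p)%Z (snd p <=? -1)%Z).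

Ltac bsolve := repeat (rewrite ?Bool.andb_true_iff, ?Z.leb_le, ?Z.ltb_lt in *).

Lemma inQpos_spec n p : inQpos n p = true <->
  (0 <= fst p <= Z.of_nat n /\ 0 <= snd p <= Z.of_nat n)%Z.
Proof. unfold inQpos. bsolve. lia. Qed.

Lemma inQneg_spec n p : inQneg n p = true <->
  (- Z.of_nat n - 1 <= fst p <= -1 /\ - Z.of_nat n - 1 <= snd p <= -1)%Z.
Proof. unfold inQneg. bsolve. lia. Qed.

Lemma In_Qpos n p : In p (Qpos n) <-> inQpos n p = true.
Proof. rewrite inQpos_spec. unfold Qpos. rewrite in_map_iff. split.
- intros [[a b] [<- H]]. apply in_prod_iff in H. rewrite !in_seq in H. simpl. lia.
- destruct p as [a b]; cbn [fst snd]; intros H. exists (Z.to_nat a, Z.to_nat b). cbn [fst snd].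
  split. f_equal; lia. apply in_prod_iff; rewrite !in_seq; lia. Qed.

Lemma In_Qneg n p : In p (Qneg n) <-> inQneg n p = true.
Proof. rewrite inQneg_spec. unfold Qneg. rewrite in_map_iff. split.
- intros [[a b] [<- H]]. apply in_prod_iff in H. rewrite !in_seq in H. simpl. lia.
- destruct p as [a b]; cbn [fst snd]; intros H. exists (Z.to_nat (- a - 1), Z.to_nat (- b - 1)). cbn [fst snd].
  split. f_equal; lia. apply in_prod_iff; rewrite !in_seq; lia. Qed.

Lemma NoDup_Qpos n : NoDup (Qpos n).
Proof. apply FinFun.Injective_map_NoDup. intros [a b] [c d] H. simpl in H.
apply pair_inj in H; f_equal; lia. apply NoDup_list_prod; apply seq_NoDup. Qed.

Lemma NoDup_Qneg n : NoDup (Qneg n).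
Proof. apply FinFun.Injective_map_NoDup. intros [a b] [c d] H. simpl in H.
apply pair_inj in H; f_equal; lia. apply NoDup_list_prod; apply seq_NoDup. Qed.

Definition zsym (L : nat) : list Z :=
  map Z.of_nat (seq 0 (S L)) ++ map (fun i => - Z.of_nat (S i))%Z (seq 0 L).

Lemma In_zsym L z : In z (zsym L) <-> (- Z.of_nat L <= z <= Z.of_nat L)%Z.
Proof. unfold zsym. rewrite in_app_iff, !in_map_iff. split.
- intros [[i [<- H]]|[i [<- H]]]; rewrite in_seq in H; lia.
- intros H. destruct (Z_le_gt_dec 0 z).
  + left. exists (Z.to_nat z). rewrite in_seq. split; lia.
  + right. exists (Z.to_nat (- z - 1)). rewrite in_seq. split; lia. Qed.

Lemma NoDup_zsym L : NoDup (zsym L).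
Proof. unfold zsym. apply NoDup_app.
- apply FinFun.Injective_map_NoDup. intros a b H; lia. apply seq_NoDup.
- apply FinFun.Injective_map_NoDup. intros a b H; lia. apply seq_NoDup.
- intros z H1 H2. rewrite in_map_iff in H1, H2.
  destruct H1 as [a [<- _]]. destruct H2 as [b [H _]]. lia. Qed.

Definition Big (L : nat) : list (Z * Z) := list_prod (zsym L) (zsym L).

Lemma In_Big L p : In p (Big L) <->
  (- Z.of_nat L <= fst p <= Z.of_nat L /\ - Z.of_nat L <= snd p <= Z.of_nat L)%Z.
Proof. destruct p. unfold Big. rewrite in_prod_iff, !In_zsym. simpl. tauto. Qed.

Lemma NoDup_Big L : NoDup (Big L).
Proof. apply NoDup_list_prod; apply NoDup_zsym. Qed.

Definition phi (p : Z * Z) : Z * Z := (2 * snd p, fst p - snd p)%Z.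
Definition psi (p : Z * Z) : Z * Z := (- 2 * fst p - 1, fst p - snd p)%Z.

Lemma NoDup_PP L : NoDup (map phi (Big L) ++ map psi (Big L)).
Proof. apply NoDup_app.
- apply FinFun.Injective_map_NoDup. intros [a b] [c d] H; unfold phi in H; cbn [fst snd] in H.
  apply pair_inj in H; f_equal; lia. apply NoDup_Big.
- apply FinFun.Injective_map_NoDup. intros [a b] [c d] H; unfold psi in H; cbn [fst snd] in H.
  apply pair_inj in H; f_equal; lia. apply NoDup_Big.
- intros x H1 H2. rewrite in_map_iff in H1, H2.
  destruct H1 as [[a b] [<- _]]. destruct H2 as [[c d] [H _]].
  unfold phi, psi in H; cbn [fst snd] in H. apply pair_inj in H; lia. Qed.


Lemma PP_cover (L : nat) (p : Z * Z) :
  (Z.abs (fst p) + Z.abs (snd p) <= Z.of_nat L)%Z ->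
  In p (map phi (Big L) ++ map psi (Big L)).
Proof. destruct p as [a b]; cbn [fst snd]; intros H. rewrite in_app_iff, !in_map_iff.
destruct (Z.Even_or_Odd a) as [[k Hk]|[k Hk]].
- left. exists ((k + b)%Z, k). unfold phi; cbn [fst snd]. split. f_equal; lia.
  rewrite In_Big; cbn [fst snd]; lia.
- right. exists ((- k - 1)%Z, (- k - 1 - b)%Z). unfold psi; cbn [fst snd]. split. f_equal; lia.
  rewrite In_Big; cbn [fst snd]; lia. Qed.

Definition ind (b : bool) : R := if b then 1 else 0.

Lemma ind_C b t : (RtoC (ind b) * t)%C = if b then t else RtoC 0.
Proof. destruct b; unfold ind; simpl; ring. Qed.

Definition Tg (a b c : Z) (x y q : C) (p : Z * Z) : C := hecke_term a b c x y q (fst p) (snd p).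

Lemma partial_SC a b c x y q n :
  hecke_partial a b c x y q n = (SC (Qpos n) (Tg a b c x y q) - SC (Qneg n) (Tg a b c x y q))%C.
Proof.
assert (H : forall g : nat -> nat -> C, sum_n (fun r => sum_n (fun s => g r s) n) n =
   SC (list_prod (seq 0 (S n)) (seq 0 (S n))) (fun p => g (fst p) (snd p))).
{ intros g. rewrite sum_n_SC, SC_prod. apply SC_ext; intros. apply sum_n_SC. }
unfold hecke_partial. rewrite (H (fun r s => hecke_term a b c x y q (Z.of_nat r) (Z.of_nat s))).
rewrite (H (fun r s => hecke_term a b c x y q (- Z.of_nat (S r)) (- Z.of_nat (S s)))).
unfold Qpos, Qneg. rewrite !SC_map. reflexivity. Qed.

Definition w1 (n : nat) (p : Z * Z) : R := ind (inQpos n p) - ind (inQneg n p).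
Definition w2 (n : nat) (p : Z * Z) : R :=
  ind (inQpos n (phi p)) - ind (inQpos n (psi p)) - ind (inQneg n (phi p)) + ind (inQneg n (psi p)).

Lemma LHS_rep (g : Z * Z -> C) n L : (n + 1 <= L)%nat ->
  (SC (Qpos n) g - SC (Qneg n) g)%C = SC (Big L) (fun p => RtoC (w1 n p) * g p)%C.
Proof. intros HL.
rewrite (SC_embed (Qpos n) (Big L) (inQpos n)); [| apply NoDup_Qpos | apply NoDup_Big |].
2:{ intros x. rewrite In_Qpos, In_Big, inQpos_spec. lia. }
rewrite (SC_embed (Qneg n) (Big L) (inQneg n)); [| apply NoDup_Qneg | apply NoDup_Big |].
2:{ intros x. rewrite In_Qneg, In_Big, inQneg_spec. lia. }
transitivity (SC (Big L) (fun x => (if inQpos n x then g x else 0) - (if inQneg n x then g x else 0))%C).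
{ symmetry. apply SC_minus. }
apply SC_ext. intros p _. unfold w1.
rewrite RtoC_minus. destruct (inQpos n p), (inQneg n p); unfold ind; ring. Qed.

Lemma RHS_rep (g2 g1 : Z * Z -> C) n L : (2 * n + 2 <= L)%nat ->
  (forall p, g2 (phi p) = g1 p) -> (forall p, g2 (psi p) = - g1 p)%C ->
  (SC (Qpos n) g2 - SC (Qneg n) g2)%C = SC (Big L) (fun p => RtoC (w2 n p) * g1 p)%C.
Proof. intros HL Hphi Hpsi.
rewrite (SC_embed (Qpos n) (map phi (Big L) ++ map psi (Big L)) (inQpos n)); [| apply NoDup_Qpos | apply (NoDup_PP L) |].
2:{ intros x. rewrite In_Qpos. split; [|tauto]. intros H; split; auto.
    apply PP_cover. apply inQpos_spec in H. lia. }
rewrite (SC_embed (Qneg n) (map phi (Big L) ++ map psi (Big L)) (inQneg n)); [| apply NoDup_Qneg | apply (NoDup_PP L) |].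
2:{ intros x. rewrite In_Qneg. split; [|tauto]. intros H; split; auto.
    apply PP_cover. apply inQneg_spec in H. lia. }
rewrite !SC_app, !SC_map.
transitivity (SC (Big L) (fun p => (if inQpos n (phi p) then g2 (phi p) else 0)
   + (if inQpos n (psi p) then g2 (psi p) else 0)
   - (if inQneg n (phi p) then g2 (phi p) else 0)
   - (if inQneg n (psi p) then g2 (psi p) else 0))%C).
{ rewrite !SC_minus, !SC_plus. ring. }
apply SC_ext. intros p _. unfold w2. rewrite Hphi, Hpsi.
repeat rewrite ?RtoC_plus, ?RtoC_minus.
destruct (inQpos n (phi p)), (inQpos n (psi p)), (inQneg n (phi p)), (inQneg n (psi p)); unfold ind; ring. Qed.

Definition T1 (tau : C) (K j : Z) : Z * Z -> C :=
  Tg 1 (1 + 2 * K) 1 (qpow tau (1 + (IZR (K + 2 * j) + IZR K) / 2))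
     (qpow tau (1 - (IZR (K + 2 * j) - IZR K) / 2)) (qpow tau 1).
Definition T2 (tau : C) (K j : Z) : Z * Z -> C :=
  Tg (K + 1) (K + 1) 1 (qpow tau (IZR K + 1))
     (qpow tau (1 + (IZR (K + 2 * j) + IZR K) / 2)) (qpow tau 1).

Lemma T1_Ef tau K j p : T1 tau K j p =
  Ef (- (2 * PI * Im tau) * IZR (e1 K j (fst p) (snd p)))
     (PI * IZR (fst p + snd p) + 2 * PI * Re tau * IZR (e1 K j (fst p) (snd p))).
Proof. unfold T1, Tg. rewrite !qpow_Ef, term_Ef. unfold e1.
apply Ef_ext; rewrite ?plus_IZR, ?mult_IZR, ?minus_IZR, ?plus_IZR, ?mult_IZR; field. Qed.

Lemma T2_Ef tau K j p : T2 tau K j p =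
  Ef (- (2 * PI * Im tau) * IZR (e2 K j (fst p) (snd p)))
     (PI * IZR (fst p + snd p) + 2 * PI * Re tau * IZR (e2 K j (fst p) (snd p))).
Proof. unfold T2, Tg. rewrite !qpow_Ef, term_Ef. unfold e2.
apply Ef_ext; rewrite ?plus_IZR, ?mult_IZR, ?minus_IZR, ?plus_IZR, ?mult_IZR; field. Qed.

Lemma T2_phi tau K j p : T2 tau K j (phi p) = T1 tau K j p.
Proof. rewrite T2_Ef, T1_Ef. unfold phi; cbn [fst snd]. rewrite e_phi.
apply Ef_ext. reflexivity. f_equal. f_equal. f_equal. ring. Qed.

Lemma T2_psi tau K j p : T2 tau K j (psi p) = (- T1 tau K j p)%C.
Proof. rewrite T2_Ef, T1_Ef. unfold psi; cbn [fst snd]. rewrite e_psi.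
rewrite <- (Ef_flip _ _ (- (fst p + snd p))). apply Ef_ext. reflexivity.
rewrite !plus_IZR, !minus_IZR, !opp_IZR, !mult_IZR, !plus_IZR. simpl (IZR (-2)). ring. Qed.

Lemma Cmod_T1 tau K j p : Cmod (T1 tau K j p) = exp (- (2 * PI * Im tau) * IZR (e1 K j (fst p) (snd p))).
Proof. rewrite T1_Ef, Cmod_Ef. reflexivity. Qed.

Definition N1 (p : Z * Z) : Z := (Z.abs (fst p) + Z.abs (snd p))%Z.

Lemma ind_bounds b : 0 <= ind b <= 1.
Proof. destruct b; unfold ind; lra. Qed.

Ltac beq := apply Bool.eq_iff_eq_true; bsolve.

Section W.
Variables (n : nat) (p : Z * Z).
Hypothesis Hs : (2 * N1 p <= Z.of_nat n)%Z.

Lemma s1 : inQpos n p = andb (0 <=? fst p)%Z (0 <=? snd p)%Z.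
Proof. unfold N1 in Hs. beq. rewrite inQpos_spec. lia. Qed.
Lemma s2 : inQneg n p = andb (negb (0 <=? fst p)%Z) (negb (0 <=? snd p)%Z).
Proof. unfold N1 in Hs. rewrite !Z.leb_antisym, !Bool.negb_involutive. beq. rewrite inQneg_spec. lia. Qed.
Lemma s3 : inQpos n (phi p) = andb (0 <=? snd p)%Z (snd p <=? fst p)%Z.
Proof. unfold N1 in Hs. beq. rewrite inQpos_spec. unfold phi; cbn [fst snd]. lia. Qed.
Lemma s4 : inQpos n (psi p) = andb (negb (0 <=? fst p)%Z) (snd p <=? fst p)%Z.
Proof. unfold N1 in Hs. rewrite !Z.leb_antisym, !Bool.negb_involutive. beq. rewrite inQpos_spec. unfold psi; cbn [fst snd]. lia. Qed.
Lemma s5 : inQneg n (phi p) = andb (negb (0 <=? snd p)%Z) (negb (snd p <=? fst p)%Z).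
Proof. unfold N1 in Hs. rewrite !Z.leb_antisym, !Bool.negb_involutive. beq. rewrite inQneg_spec. unfold phi; cbn [fst snd]. lia. Qed.
Lemma s6 : inQneg n (psi p) = andb (0 <=? fst p)%Z (negb (snd p <=? fst p)%Z).
Proof. unfold N1 in Hs. rewrite !Z.leb_antisym, !Bool.negb_involutive. beq. rewrite inQneg_spec. unfold psi; cbn [fst snd]. lia. Qed.

Lemma w_small : w1 n p = w2 n p.
Proof. unfold w1, w2. rewrite s1, s2, s3, s4, s5, s6.
destruct (Z.leb_spec 0 (fst p)), (Z.leb_spec 0 (snd p)), (Z.leb_spec (snd p) (fst p));
  try lia; unfold ind; simpl; lra. Qed.
End W.

Lemma w1_small2 n n' p : (2 * N1 p <= Z.of_nat n)%Z -> (n <= n')%nat -> w1 n' p = w1 n p.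
Proof. intros H1 H2. unfold w1. rewrite (s1 n), (s2 n), (s1 n'), (s2 n'); auto; lia. Qed.

Section Z0.
Variables (n : nat) (p : Z * Z).
Hypothesis Hq : ~ quad (fst p) (snd p).
Lemma z1 : inQpos n p = false.
Proof. apply Bool.not_true_iff_false. rewrite inQpos_spec. unfold quad in Hq. lia. Qed.
Lemma z2 : inQneg n p = false.
Proof. apply Bool.not_true_iff_false. rewrite inQneg_spec. unfold quad in Hq. lia. Qed.
Lemma z3 : inQpos n (phi p) = false.
Proof. apply Bool.not_true_iff_false. rewrite inQpos_spec. unfold quad in Hq. unfold phi; cbn [fst snd]. lia. Qed.
Lemma z4 : inQpos n (psi p) = false.
Proof. apply Bool.not_true_iff_false. rewrite inQpos_spec. unfold quad in Hq. unfold psi; cbn [fst snd]. lia. Qed.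
Lemma z5 : inQneg n (phi p) = false.
Proof. apply Bool.not_true_iff_false. rewrite inQneg_spec. unfold quad in Hq. unfold phi; cbn [fst snd]. lia. Qed.
Lemma z6 : inQneg n (psi p) = false.
Proof. apply Bool.not_true_iff_false. rewrite inQneg_spec. unfold quad in Hq. unfold psi; cbn [fst snd]. lia. Qed.
Lemma w1_z : w1 n p = 0.
Proof. unfold w1. rewrite z1, z2. unfold ind; lra. Qed.
Lemma w2_z : w2 n p = 0.
Proof. unfold w2. rewrite z3, z4, z5, z6. unfold ind; lra. Qed.
End Z0.

Lemma wd12 n p : ~ (quad (fst p) (snd p) /\ (Z.of_nat n < 2 * N1 p)%Z) -> w1 n p - w2 n p = 0.
Proof. intros H. destruct (Z_lt_le_dec (Z.of_nat n) (2 * N1 p)).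
- assert (~ quad (fst p) (snd p)) by tauto. rewrite w1_z, w2_z; auto; lra.
- rewrite w_small; auto; lra. Qed.

Lemma wd11 n n' p : (n <= n')%nat -> ~ (quad (fst p) (snd p) /\ (Z.of_nat n < 2 * N1 p)%Z) -> w1 n' p - w1 n p = 0.
Proof. intros Hn H. destruct (Z_lt_le_dec (Z.of_nat n) (2 * N1 p)).
- assert (~ quad (fst p) (snd p)) by tauto. rewrite !w1_z; auto; lra.
- rewrite (w1_small2 n n'); auto; lra. Qed.

Lemma wd12_b n p : Rabs (w1 n p - w2 n p) <= 4.
Proof. unfold w1, w2.
pose proof (ind_bounds (inQpos n p)). pose proof (ind_bounds (inQneg n p)).
pose proof (ind_bounds (inQpos n (phi p))). pose proof (ind_bounds (inQneg n (phi p))).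
pose proof (ind_bounds (inQpos n (psi p))). pose proof (ind_bounds (inQneg n (psi p))).
apply Rabs_le; lra. Qed.

Lemma wd11_b n n' p : Rabs (w1 n' p - w1 n p) <= 4.
Proof. unfold w1.
pose proof (ind_bounds (inQpos n p)). pose proof (ind_bounds (inQneg n p)).
pose proof (ind_bounds (inQpos n' p)). pose proof (ind_bounds (inQneg n' p)).
apply Rabs_le; lra. Qed.

Lemma exp_le' x y : x <= y -> exp x <= exp y.
Proof. intros H. destruct (Rle_lt_or_eq_dec x y H). apply Rlt_le, exp_increasing; auto. subst; lra. Qed.

Lemma exp_mul_INR a i : exp (a * INR i) = exp a ^ i.
Proof. induction i. simpl. rewrite Rmult_0_r, exp_0. reflexivity.
rewrite S_INR, Rmult_plus_distr_l, Rmult_1_r, exp_plus, IHi. simpl. ring. Qed.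

Lemma geom_bound x k : 0 <= x < 1 -> SR (seq 0 k) (fun i => x ^ i) <= 1 / (1 - x).
Proof. intros Hx.
assert (H : SR (seq 0 k) (fun i => x ^ i) * (1 - x) = 1 - x ^ k).
{ induction k. unfold SR; simpl; ring. rewrite seq_S, SR_app. unfold SR at 2. simpl.
  fold (SR (seq 0 k) (fun i => x ^ i)). rewrite Rmult_plus_distr_r, IHk. ring. }
assert (0 <= x ^ k) by (apply pow_le; lra).
apply (Rmult_le_reg_r (1 - x)). lra. rewrite H. field_simplify; lra. Qed.

Lemma zsym_bound c L : 0 < c ->
  SR (zsym L) (fun z => exp (- c * IZR (Z.abs z))) <= 2 / (1 - exp (- c)).
Proof. intros Hc. set (x := exp (- c)).
assert (Hx : 0 <= x < 1). { unfold x. split. apply Rlt_le, exp_pos. rewrite <- exp_0. apply exp_increasing. lra. }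
unfold zsym. rewrite SR_app, !SR_map.
apply Rle_trans with (SR (seq 0 (S L)) (fun i => x ^ i) + SR (seq 0 L) (fun i => x ^ i)).
- apply Rplus_le_compat; apply SR_le; intros i _.
  + rewrite Z.abs_eq by lia. rewrite <- INR_IZR_INZ, exp_mul_INR. unfold x; lra.
  + rewrite Z.abs_neq by lia. rewrite Z.opp_involutive, <- INR_IZR_INZ, exp_mul_INR.
    fold x. simpl. assert (0 <= x ^ i) by (apply pow_le; lra).
    assert (x * x ^ i <= 1 * x ^ i) by (apply Rmult_le_compat_r; lra). lra.
- pose proof (geom_bound x (S L) Hx). pose proof (geom_bound x L Hx).
  replace (2 / (1 - x)) with (1 / (1 - x) + 1 / (1 - x)) by (field; lra). lra. Qed.

Definition Bnd (tau : C) (K j : Z) (n : nat) : R :=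
  4 * exp (2 * PI * Im tau * IZR (Dc K j)) * exp (- (2 * PI * Im tau) * INR n / 2) *
  ((2 / (1 - exp (- (2 * PI * Im tau)))) * (2 / (1 - exp (- (2 * PI * Im tau))))).

Lemma tail tau K j L n (w : Z * Z -> R) : (0 <= K)%Z -> 0 < Im tau ->
  (forall p, ~ (quad (fst p) (snd p) /\ (Z.of_nat n < 2 * N1 p)%Z) -> w p = 0) ->
  (forall p, Rabs (w p) <= 4) ->
  Cmod (SC (Big L) (fun p => RtoC (w p) * T1 tau K j p)%C) <= Bnd tau K j n.
Proof. intros HK Ht Hw0 Hwb.
set (c := 2 * PI * Im tau).
assert (Hc : 0 < c) by (unfold c; pose proof PI_RGT_0; nra).
set (f := fun z : Z => exp (- c * IZR (Z.abs z))).
set (C0 := 4 * exp (c * IZR (Dc K j)) * exp (- c * INR n / 2)).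
eapply Rle_trans. apply Cmod_SC.
apply Rle_trans with (SR (Big L) (fun p => C0 * (f (fst p) * f (snd p)))).
- apply SR_le. intros p _. rewrite Cmod_mult, Cmod_R, Cmod_T1. fold c.
  assert (H0 : 0 <= C0 * (f (fst p) * f (snd p))).
  { unfold C0, f. pose proof (exp_pos (c * IZR (Dc K j))). pose proof (exp_pos (- c * INR n / 2)).
    pose proof (exp_pos (- c * IZR (Z.abs (fst p)))). pose proof (exp_pos (- c * IZR (Z.abs (snd p)))).
    repeat apply Rmult_le_pos; lra. }
  destruct (Classical_Prop.classic (quad (fst p) (snd p) /\ (Z.of_nat n < 2 * N1 p)%Z)) as [[Hq Hn]|Hn].
  + pose proof (e1_lower K j (fst p) (snd p) HK Hq) as He.
    replace (C0 * (f (fst p) * f (snd p))) with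
      (4 * (exp (c * IZR (Dc K j)) * exp (- c * INR n / 2) * (f (fst p) * f (snd p)))) by (unfold C0; ring).
    apply Rmult_le_compat. apply Rabs_pos. apply Rlt_le, exp_pos. apply Hwb.
    apply Rle_trans with (exp (c * IZR (Dc K j) + - c * IZR (N1 p) + - c * IZR (N1 p))).
    * apply exp_le'. apply IZR_le in He. rewrite minus_IZR, mult_IZR in He.
      unfold N1 in *. rewrite plus_IZR in *. nra.
    * rewrite !exp_plus. unfold f.
      assert (E : exp (- c * IZR (N1 p)) = exp (- c * IZR (Z.abs (fst p))) * exp (- c * IZR (Z.abs (snd p)))).
      { rewrite <- exp_plus. f_equal. unfold N1. rewrite plus_IZR. ring. }
      assert (E2 : exp (- c * IZR (N1 p)) <= exp (- c * INR n / 2)).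
      { apply exp_le'. apply IZR_lt in Hn. rewrite mult_IZR, <- INR_IZR_INZ in Hn. nra. }
      pose proof (exp_pos (c * IZR (Dc K j))). pose proof (exp_pos (- c * IZR (N1 p))).
      rewrite <- E.
      apply Rmult_le_compat_r. lra. apply Rmult_le_compat_l; lra.
  + rewrite (Hw0 p Hn), Rabs_R0, Rmult_0_l. exact H0.
- rewrite (SR_scal (Big L) C0 (fun p => f (fst p) * f (snd p))).
  unfold Big. rewrite (SR_prod (zsym L) (zsym L) f f).
  pose proof (zsym_bound c L Hc). unfold f in *.
  assert (0 <= SR (zsym L) (fun z => exp (- c * IZR (Z.abs z)))).
  { apply Rle_trans with (SR (zsym L) (fun _ => 0)). 
    clear. induction (zsym L); unfold SR in *; simpl; lra.
    apply SR_le. intros; apply Rlt_le, exp_pos. }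
  unfold Bnd. fold c. unfold C0.
  assert (0 <= 4 * exp (c * IZR (Dc K j)) * exp (- c * INR n / 2)).
  { pose proof (exp_pos (c * IZR (Dc K j))). pose proof (exp_pos (- c * INR n / 2)).
    apply Rmult_le_pos; [|lra]. lra. }
  apply Rmult_le_compat_l; auto. apply Rmult_le_compat; auto. Qed.

Lemma Cmod_ball (x y : C) (eps : R) : Cmod (y - x) < eps -> @ball C_CompleteNormedModule x eps y.
Proof. intros H. apply (@norm_compat1 _ C_NormedModule). exact H. Qed.

Lemma ball_Cmod (x y : C) (eps : posreal) : @ball C_CompleteNormedModule x eps y -> Cmod (y - x) < @norm_factor C_AbsRing C_NormedModule * eps.
Proof. intros H. apply (@norm_compat2 _ C_NormedModule). exact H. Qed.

Lemma lim_eq (u v : nat -> C) (t : nat -> R) :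
  (forall eps, 0 < eps -> exists N, forall n, (N <= n)%nat -> t n < eps) ->
  (forall n p, (n <= p)%nat -> Cmod (u p - u n) <= t n) ->
  (forall n, Cmod (u n - v n) <= t n) ->
  limC u = limC v.
Proof. intros Ht Hu Huv.
assert (PF : forall w : nat -> C, ProperFilter (filtermap w eventually)).
{ intros w. apply filtermap_proper_filter. apply eventually_filter. }
assert (CU : cauchy (T := C_CompleteNormedModule) (filtermap u eventually)).
{ intros eps. destruct (Ht eps (cond_pos eps)) as [N HN]. exists (u N).
  exists N. intros p Hp. apply Cmod_ball. eapply Rle_lt_trans. apply Hu; auto. apply HN; lia. }
assert (CV : cauchy (T := C_CompleteNormedModule) (filtermap v eventually)).
{ intros eps. destruct (Ht (eps / 2)) as [N HN]. pose proof (cond_pos eps); lra. exists (u N).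
  exists N. intros p Hp. apply Cmod_ball.
  replace (v p - u N)%C with ((u p - u N) - (u p - v p))%C by ring.
  eapply Rle_lt_trans. apply Cmod_triangle. rewrite Cmod_opp.
  pose proof (Hu N p Hp). pose proof (Huv p). pose proof (HN N (le_n _)). pose proof (HN p Hp). lra. }
pose proof (@complete_cauchy C_CompleteNormedModule _ (PF u) CU) as LU.
pose proof (@complete_cauchy C_CompleteNormedModule _ (PF v) CV) as LV.
fold (limC u) in LU. fold (limC v) in LV.
set (lu := limC u) in *. set (lv := limC v) in *.
assert (Hnf := norm_factor_gt_0 (K := C_AbsRing) (V := C_NormedModule)).
set (nf := @norm_factor C_AbsRing C_NormedModule) in *.
assert (B : forall eps, 0 < eps -> Cmod (lu - lv) <= (2 * nf + 1) * eps).
{ intros eps Heps. destruct (LU (mkposreal eps Heps)) as [N1 H1].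
  destruct (LV (mkposreal eps Heps)) as [N2 H2]. destruct (Ht eps Heps) as [N3 H3].
  set (p := (N1 + N2 + N3)%nat).
  specialize (H1 p ltac:(unfold p; lia)). specialize (H2 p ltac:(unfold p; lia)).
  specialize (H3 p ltac:(unfold p; lia)).
  apply ball_Cmod in H1. apply ball_Cmod in H2. simpl in H1, H2. fold nf in H1, H2.
  replace (lu - lv)%C with ((v p - lv) - (u p - lu) + (u p - v p))%C by ring.
  eapply Rle_trans. apply Cmod_triangle. eapply Rle_trans. apply Rplus_le_compat_r. apply Cmod_triangle.
  rewrite Cmod_opp. pose proof (Huv p). lra. }
apply Cminus_eq_0 || idtac.
destruct (Req_dec (Cmod (lu - lv)) 0) as [E|E].
- apply Cmod_eq_0 in E. replace lu with ((lu - lv) + lv)%C by ring. rewrite E. ring.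
- exfalso. pose proof (Cmod_ge_0 (lu - lv)).
  assert (Hd : 0 < Cmod (lu - lv)) by lra.
  specialize (B (Cmod (lu - lv) / (2 * (2 * nf + 1)))).
  assert (0 < Cmod (lu - lv) / (2 * (2 * nf + 1))) by (apply Rdiv_lt_0_compat; lra).
  specialize (B H0). replace ((2 * nf + 1) * (Cmod (lu - lv) / (2 * (2 * nf + 1)))) with (Cmod (lu - lv) / 2) in B by (field; lra).
  lra. Qed.

Lemma IZR_le_INR_to_nat z : IZR z <= INR (Z.to_nat z).
Proof. destruct (Z_le_gt_dec 0 z).
- rewrite INR_IZR_INZ, Z2Nat.id by lia. lra.
- replace (Z.to_nat z) with 0%nat by lia. simpl. apply IZR_le. lia. Qed.

Lemma Bnd_lim tau K j : 0 < Im tau ->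
  forall eps, 0 < eps -> exists N, forall n, (N <= n)%nat -> Bnd tau K j n < eps.
Proof. intros Ht eps He.
set (c := 2 * PI * Im tau).
assert (Hc : 0 < c) by (unfold c; pose proof PI_RGT_0; nra).
set (G := 2 / (1 - exp (- c))).
assert (HG : 0 < G). { unfold G. apply Rdiv_lt_0_compat. lra.
  assert (exp (- c) < 1) by (rewrite <- exp_0; apply exp_increasing; lra). lra. }
set (A := 4 * exp (c * IZR (Dc K j)) * (G * G)).
assert (HA : 0 < A). { unfold A. pose proof (exp_pos (c * IZR (Dc K j))).
  apply Rmult_lt_0_compat. lra. apply Rmult_lt_0_compat; lra. }
set (M := - 2 * ln (eps / A) / c).
exists (Z.to_nat (up M)). intros n Hn.
assert (HM : M < INR n).
{ pose proof (archimed M) as [H1 _]. pose proof (IZR_le_INR_to_nat (up M)).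
  apply le_INR in Hn. lra. }
assert (E : Bnd tau K j n = A * exp (- c * INR n / 2)).
{ unfold Bnd, A, G. fold c. ring. }
rewrite E.
assert (exp (- c * INR n / 2) < eps / A).
{ rewrite <- (exp_ln (eps / A)) by (apply Rdiv_lt_0_compat; lra).
  apply exp_increasing. unfold M in HM.
  apply (Rmult_lt_compat_l c) in HM; auto.
  replace (c * (- 2 * ln (eps / A) / c)) with (- 2 * ln (eps / A)) in HM by (field; lra). lra. }
apply (Rmult_lt_compat_l A) in H; auto.
replace (A * (eps / A)) with eps in H by (field; lra). lra. Qed.

Theorem corollary1p2 (tau : C) (Htau : 0 < Im tau) (K : Z) (HK : (0 < K)%Z)
  (m : Z) (Hm : Z.Even (m - K)) :
  string_fn m K (2 * K) tau =
  (qpow tau (sfun m K (2 * K)) / (J1 tau) ^ 3 *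
   hecke_f (K + 1) (K + 1) 1 (qpow tau (IZR K + 1))
     (qpow tau (1 + (IZR m + IZR K) / 2)) (qpow tau 1))%C.
Proof.
destruct Hm as [j Hj]. assert (Em : m = (K + 2 * j)%Z) by lia. subst m.
assert (HK0 : (0 <= K)%Z) by lia.
assert (H : hecke_f 1 (1 + 2 * K) 1 (qpow tau (1 + (IZR (K + 2 * j) + IZR K) / 2))
                       (qpow tau (1 - (IZR (K + 2 * j) - IZR K) / 2)) (qpow tau 1) =
            hecke_f (K + 1) (K + 1) 1 (qpow tau (IZR K + 1))
     (qpow tau (1 + (IZR (K + 2 * j) + IZR K) / 2)) (qpow tau 1)).
{ unfold hecke_f. apply lim_eq with (t := Bnd tau K j).
  - apply Bnd_lim; auto.
  - intros n p Hnp. rewrite !partial_SC. fold (T1 tau K j).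
    rewrite (LHS_rep _ p (2 * p + 2)) by lia. rewrite (LHS_rep _ n (2 * p + 2)) by lia.
    rewrite <- SC_minus.
    rewrite (SC_ext _ _ (fun x => RtoC (w1 p x - w1 n x) * T1 tau K j x)%C).
    2:{ intros x _. rewrite RtoC_minus. ring. }
    apply tail; auto.
    + intros x Hx. apply wd11; auto.
    + intros x. apply wd11_b.
  - intros n. rewrite !partial_SC. fold (T1 tau K j). fold (T2 tau K j).
    rewrite (LHS_rep _ n (2 * n + 2)) by lia.
    rewrite (RHS_rep (T2 tau K j) (T1 tau K j) n (2 * n + 2)); [| lia | apply T2_phi | apply T2_psi].
    rewrite <- SC_minus.
    rewrite (SC_ext _ _ (fun x => RtoC (w1 n x - w2 n x) * T1 tau K j x)%C).
    2:{ intros x _. rewrite RtoC_minus. ring. }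
    apply tail; auto.
    + intros x Hx. apply wd12; auto.
    + intros x. apply wd12_b. }
unfold string_fn. rewrite H. reflexivity.
Qed.
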